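(* Let $(G,M,I)$ be a finite formal context and fix an integer $k\ge 0$. Consider the cosheaf $\mathcal F_k$ on $D(G,M,I)$ with costalks $\mathcal F_k(\sigma)=C_k(\Delta[\sigma'])$ (the degree-$k$ part of the real simplicial chain complex of the full simplex on $\sigma'$) and extension maps $\mathcal F_k(\sigma\subseteq\tau):\mathcal F_k(\tau)\to\mathcal F_k(\sigma)$ induced by the inclusions $\tau'\subseteq\sigma'$. Then the cellular cosheaf homology of $\mathcal F_k$ satisfies $H_j(\mathcal F_k)=0$ for all $j>0$.
   Context: A formal context is a triple $(G,M,I)$ with $I\subseteq G\times M$; for $A\subseteq G$, $A'=\{m: gIm\ \forall g\in A\}$, for $B\subseteq M$, $B'=\{g: gIm\ \forall m\in B\}$. The Dowker complex $D(G,M,I)$ is the abstract simplicial complex on $G$ whose simplices are the nonempty $\sigma\subseteq G$ with $\sigma'\ne\emptyset$. Fix linear orders on $G$ and $M$ (used to orient simplices). For a cosheaf $\mathcal F$ of real vector spaces on $D(G,M,I)$ (vector spaces $\mathcal F(\sigma)$ and linear maps $\mathcal F(\sigma\subseteq\tau):\mathcal F(\tau)\to\mathcal F(\sigma)$, functorial in $\sigma\subseteq\tau$), its cellular cosheaf homology is the homology of the chain complex $C_j=\bigoplus_{\dim\tau=j}\mathcal F(\tau)$ with $\partial_j x=\sum_{i=0}^{j}(-1)^i\mathcal F(\tau_i\subseteq\tau)(x)$ for $x\in\mathcal F(\tau)$, $\tau=\{g_0<\dots<g_j\}$, $\tau_i=\tau\setminus\{g_i\}$. *)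

(* Defs.v *)
From mathcomp Require Import all_boot all_order all_algebra.
From mathcomp Require Import reals.
Set Implicit Arguments. Unset Strict Implicit. Unset Printing Implicit Defensive.
Import Order.TTheory GRing.Theory Num.Theory.
Local Open Scope ring_scope.

(* A finite formal context (G,M,I) with G = 'I_n, M = 'I_m (their natural
   linear orders are the fixed orders), and I a relation G x M. *)
Section Dowker.
Variables (n m : nat) (I : 'I_n -> 'I_m -> bool).

Definition derG (A : {set 'I_n}) : {set 'I_m} :=
  [set x : 'I_m | [forall g in A, I g x]].

Definition dowker_simplex (s : {set 'I_n}) : bool :=
  (s != set0) && (derG s != set0).

(* A chain in C_j(F_k): the cellular chain group
     C_j = (+)_{dim tau = j} F_k(tau),  F_k(tau) = C_k(Delta[tau']),
   with C_k(Delta[tau']) the real vector space with basis the k-simplices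
   (subsets of size k+1) of the full simplex on tau'.  An element is given
   by its coefficient x tau rho on the basis vector rho of the summand tau. *)
Definition cosheaf_chain (k j : nat) (R : realType)
  (x : {set 'I_n} -> {set 'I_m} -> R) : Prop :=
  forall (tau : {set 'I_n}) (rho : {set 'I_m}), x tau rho != 0 ->
    [/\ dowker_simplex tau, #|tau| = j.+1,
        rho \subset derG tau & #|rho| = k.+1].

(* Extension map F_k(sigma <= tau) : C_k(Delta[tau']) -> C_k(Delta[sigma'])
   induced by tau' <= sigma': sends the oriented simplex rho to itself
   (orientations come from the fixed order on M, preserved by inclusion).
   Hence the cellular boundary
     d x = sum_i (-1)^i F_k(tau_i <= tau)(x),  tau_i = tau \ {g_i}
   has coefficient at (sigma, rho) the sum over tau = sigma + {g}, g notin sigma,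
   with sign (-1)^i, i = position of g in tau = #{h in sigma | h < g}. *)
Definition cosheaf_bd (R : realType) (x : {set 'I_n} -> {set 'I_m} -> R)
  (sigma : {set 'I_n}) (rho : {set 'I_m}) : R :=
  \sum_(g : 'I_n | g \notin sigma)
     (-1) ^+ #|[set h in sigma | (h < g)%N]| * x (g |: sigma) rho.

End Dowker.

(* Main.v *)
Require Import Defs.
From mathcomp Require Import all_boot all_order all_algebra.
From mathcomp Require Import reals.
Set Implicit Arguments. Unset Strict Implicit. Unset Printing Implicit Defensive.
Import GRing.Theory.
Local Open Scope ring_scope.

Section Proof.
Variables (R : realType) (n m : nat) (I : 'I_n -> 'I_m -> bool).

Definition derM (rho : {set 'I_m}) : {set 'I_n} := [set g | [forall r in rho, I g r]].

Lemma sub_derG (tau : {set 'I_n}) (rho : {set 'I_m}) : rho \subset derG I tau -> tau \subset derM rho.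
Proof.
move=> /subsetP H; apply/subsetP=> g gt; rewrite inE; apply/forall_inP=> r rr.
by have := H r rr; rewrite inE => /forall_inP; apply.
Qed.

Lemma has_min (S : {set 'I_n}) g : g \in S ->
  exists2 v, v \in S & forall w, w \in S -> (v <= w)%N.
Proof.
move=> gS; case: (arg_minnP (fun i : 'I_n => val i) gS) => v vS H.
by exists v.
Qed.

Definition ycone (x : {set 'I_n} -> {set 'I_m} -> R) (tau : {set 'I_n}) (rho : {set 'I_m}) : R :=
  if [pick v in derM rho | [forall w in derM rho, (v <= w)%N]] is Some v
  then (if v \in tau then x (tau :\ v) rho else 0) else 0.

End Proof.

Theorem mainTheorem5 (R : realType) (n m : nat) (I : 'I_n -> 'I_m -> bool)
  (k j : nat) : (0 < j)%N ->
  forall x : {set 'I_n} -> {set 'I_m} -> R,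
    cosheaf_chain I k j x ->
    (forall sigma rho, cosheaf_bd x sigma rho = 0) ->
    exists y : {set 'I_n} -> {set 'I_m} -> R,
      cosheaf_chain I k j.+1 y /\
      (forall sigma rho, cosheaf_bd y sigma rho = x sigma rho).
Proof.
move=> _ x xc xcyc.
exists (ycone I x); split.
- move=> tau rho; rewrite /ycone; case: pickP => [v /andP[vS /forall_inP vmin]|_]; last by rewrite eqxx.
  case: ifP => vt; last by rewrite eqxx.
  move=> /xc [/andP[tn dn] ct rs cr].
  have rt : rho \subset derG I tau.
    apply/subsetP=> r rr; rewrite inE; apply/forall_inP=> g gt.
    case: (eqVneq g v) => [->|gv].
      by move: vS; rewrite inE => /forall_inP; apply.
    have : r \in derG I (tau :\ v) by exact: (subsetP rs).
    by rewrite inE => /forall_inP; apply; rewrite !inE gv.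
  split => //.
  + rewrite /dowker_simplex; apply/andP; split.
      by apply/set0Pn; exists v.
    apply/set0Pn; have : rho != set0 by rewrite -card_gt0 cr.
    case/set0Pn=> r rr; exists r; exact: (subsetP rt).
  + by rewrite (cardsD1 v tau) vt ct.
- move=> sigma rho; rewrite /cosheaf_bd.
  have xS : forall tau, x tau rho != 0 -> tau \subset derM I rho.
    by move=> tau /xc [_ _ rs _]; exact: sub_derG.
  rewrite /ycone; case: pickP => [v /andP[vS /forall_inP vmin]|none]; last first.
    rewrite big1; last by move=> g _; rewrite mulr0.
    case: (eqVneq (x sigma rho) 0) => [->//|nz].
    have sS := xS _ nz.
    have [/andP[sn _] _ _ _] := xc _ _ nz.
    case/set0Pn: sn => g gs.
    have gS := subsetP sS g gs.
    case: (has_min gS) => v vS vmin.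
    have := none v; rewrite vS /=.
    suff -> : [forall w in derM I rho, (v <= w)%N] by [].
    by apply/forall_inP => w wS; exact: vmin.
  case: (boolP (v \in sigma)) => vs; last first.
    rewrite (bigD1 v) //= big1 ?addr0; last first.
      move=> g /andP[_ gv].
      have -> : (v \in g |: sigma) = false.
        by rewrite in_setU1 (negbTE vs) orbF; apply/negbTE; rewrite eq_sym.
      by rewrite mulr0.
    rewrite setU11 setU1K //.
    case: (eqVneq (x sigma rho) 0) => [->|nz]; first by rewrite mulr0.
    have sS := xS _ nz.
    suff -> : [set h in sigma | (h < v)%N] = set0 by rewrite cards0 expr0 mul1r.
    apply/setP=> h; rewrite !inE; case hs: (h \in sigma) => //=.
    by rewrite ltnNge vmin //; exact: (subsetP sS h hs).
  have cyc := xcyc (sigma :\ v) rho; rewrite /cosheaf_bd in cyc.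
  rewrite (bigD1 v) /= in cyc; last by rewrite !inE eqxx.
  rewrite setD1K // in cyc.
  have -> : \sum_(g | g \notin sigma)
      (-1) ^+ #|[set h in sigma | (h < g)%N]| *
      (if v \in g |: sigma then x ((g |: sigma) :\ v) rho else 0)
    = - \sum_(g | g \notin sigma)
      (-1) ^+ #|[set h in sigma :\ v | (h < g)%N]| * x (g |: (sigma :\ v)) rho.
    rewrite -sumrN; apply: eq_bigr => g gs.
    have gv : g != v by apply: contraNneq gs => ->.
    rewrite in_setU1 vs orbT.
    have -> : (g |: sigma) :\ v = g |: (sigma :\ v).
      apply/setP=> h; rewrite !inE; case: (eqVneq h v) => [->|hv] //=.
      by rewrite eq_sym (negbTE gv).
    case: (eqVneq (x (g |: (sigma :\ v)) rho) 0) => [->|nz]; first by rewrite !mulr0 oppr0.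
    have gS : g \in derM I rho by apply: (subsetP (xS _ nz)); rewrite setU11.
    have vg : (v < g)%N.
      by rewrite ltn_neqAle vmin // andbT; apply: contra gv => /eqP/val_inj ->.
    have -> : [set h in sigma | (h < g)%N] = v |: [set h in sigma :\ v | (h < g)%N].
      apply/setP=> h; rewrite !inE; case: (eqVneq h v) => [->|hv] //=.
      by rewrite vs vg.
    by rewrite cardsU1 !inE eqxx /= add1n exprS mulN1r mulNr.
  move: cyc.
  rewrite (eq_bigl (fun g => g \notin sigma)); last first.
    by move=> i; rewrite in_setD1; case: (eqVneq i v) => [->|] /=; rewrite ?vs ?andbT.
    case: (eqVneq (x sigma rho) 0) => [->|nz].
    by rewrite mulr0 add0r => ->; rewrite oppr0.
  have sS := xS _ nz.
  have -> : [set h in sigma :\ v | (h < v)%N] = set0.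
    apply/setP=> h; rewrite !inE; case: (eqVneq h v) => [->|hv] //=.
    case hs: (h \in sigma) => //=.
    by rewrite ltnNge vmin //; exact: (subsetP sS h hs).
  rewrite cards0 expr0 mul1r => H; apply/eqP.
  rewrite eq_sym -subr_eq0 opprK H; exact: eqxx.
Qed.
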